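(* For every graph $G$ on $n\ge 2$ vertices, $\rho_T(G)\le n-1$.
   Context: Graphs are finite and simple. For $u,v\in(\mathbb{R}\cup\{\infty\})^k$ the min-plus tropical dot product is $u\odot v=\min\{u_1+v_1,\dots,u_k+v_k\}$ (with $a+\infty=\infty$). A min-plus $k$-tropical dot product representation of a graph $G=(V,E)$ is a map $f:V\to(\mathbb{R}\cup\{\infty\})^k$ together with a threshold $t>0$ such that for all distinct $x,y\in V$: $xy\in E$ if and only if $f(x)\odot f(y)\ge t$. $\rho_T(G)$ denotes the least $k\ge 1$ for which $G$ has a min-plus $k$-tropical dot product representation. *)

(* Defs.v *)
From mathcomp Require Import all_boot.
From Stdlib Require Import Reals.

Set Implicit Arguments.
Unset Strict Implicit.
Unset Printing Implicit Defensive.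

(* Extended reals R ∪ {∞}: [Some x] is the real x, [None] is ∞. *)
Definition extR := option R.

Definition eplus (a b : extR) : extR :=
  match a, b with
  | Some x, Some y => Some (x + y)%R
  | _, _ => None
  end.

Definition emin (a b : extR) : extR :=
  match a, b with
  | Some x, Some y => Some (Rmin x y)
  | Some x, None => Some x
  | None, b => b
  end.

Definition ege (a : extR) (t : R) : Prop :=
  match a with
  | Some x => (t <= x)%R
  | None => True
  end.

Definition tdot (k : nat) (u v : 'I_k -> extR) : extR :=
  foldr emin None [seq eplus (u i) (v i) | i <- enum 'I_k].

Definition trop_rep (V : finType) (e : rel V) (k : nat)
    (f : V -> 'I_k -> extR) (t : R) : Prop :=
  (0 < t)%R /\
  forall x y : V, x <> y -> (e x y <-> ege (tdot (f x) (f y)) t).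

Definition has_trop_rep (V : finType) (e : rel V) (k : nat) : Prop :=
  exists (f : V -> 'I_k -> extR) (t : R), trop_rep e f t.

(* Main.v *)
Require Import Defs.
From mathcomp Require Import all_boot.
From Stdlib Require Import Reals Lra.
From mathcomp Require Import zify.

Lemma ege_emin a b t : ege (emin a b) t <-> ege a t /\ ege b t.
Proof.
case: a => [x|]; case: b => [y|] /=; try tauto.
unfold Rmin; destruct (Rle_dec x y); split; intuition lra.
Qed.

Lemma ege_foldr (s : seq extR) t :
  ege (foldr emin None s) t <-> (forall a, List.In a s -> ege a t).
Proof.
elim: s => [|a s IH] /=; first by split => // _ a [].
rewrite ege_emin IH; split.
  by move=> [H1 H2] b [<-|Hb]; [|apply: H2].
by move=> H; split; [apply: H; left|move=> b Hb; apply: H; right].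
Qed.

Lemma ege_tdot k (u v : 'I_k -> extR) t :
  ege (tdot u v) t <-> forall j, ege (eplus (u j) (v j)) t.
Proof.
rewrite /tdot ege_foldr; split.
  move=> H j; apply: H; apply: (List.in_map (fun i => eplus (u i) (v i))).
  have : j \in enum 'I_k by rewrite mem_enum.
  elim: (enum 'I_k) => [|a s IH] //=; rewrite in_cons => /orP [/eqP ->|/IH]; by [left|right].
move=> H a /List.in_map_iff [j [<- _]]; exact: H.
Qed.

Theorem mainTheorem3 (V : finType) (e : rel V) :
  symmetric e -> irreflexive e -> 2 <= #|V| ->
  exists k : nat, 1 <= k <= #|V| - 1 /\ has_trop_rep e k.
Proof.
move=> esym eirr hV.
set k := #|V| - 1.
exists k; split; first by apply/andP; split => //; rewrite /k; case: #|V| hV => [|[|n]].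
pose f (x : V) (j : 'I_k) : extR :=
  Some (if (enum_rank x : nat) == (j : nat) then 0%R
        else if [exists z, ((enum_rank z : nat) == j) && e x z] then 1%R else (/2)%R).
exists f, 1%R; split; first lra.
have rinj : forall x z : V, (enum_rank z : nat) = enum_rank x -> z = x.
  by move=> x z /val_inj /enum_rank_inj.
have key : forall (x y : V) (j : 'I_k), (enum_rank x : nat) = j ->
    [exists z, ((enum_rank z : nat) == j) && e y z] = e y x.
  move=> x y j hx; apply/existsP/idP.
    by move=> [z /andP [/eqP hz hyz]]; rewrite -(rinj x z) // hx.
  by move=> hyx; exists x; rewrite hx eqxx hyx.
have rne : forall x y : V, x <> y -> (enum_rank x : nat) <> enum_rank y.
  by move=> x y hxy h; apply: hxy; apply: rinj.
move=> x y hxy; rewrite ege_tdot; split.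
- move=> exy j; rewrite /f /=.
  case: eqP => hx.
    have hy : (enum_rank y : nat) <> j by move=> hy; apply: (rne _ _ hxy); rewrite hx hy.
    case: eqP => // _; rewrite (key x y j hx) esym exy; lra.
  case: eqP => hy.
    rewrite (key y x j hy) exy; lra.
  case: ifP; case: ifP => _ _; lra.
- move=> H; apply/negPn/negP => nexy.
  have hrx := ltn_ord (enum_rank x); have hry := ltn_ord (enum_rank y).
  have hr := rne _ _ hxy.
  have [lx|lx] := ltnP (enum_rank x) k.
    have := H (Ordinal lx); rewrite /f /= eqxx.
    case: eqP => [/= hy|_]; first by exfalso; apply: hr.
    by rewrite (key x y (Ordinal lx)) // esym (negbTE nexy) /=; lra.
  have ly : enum_rank y < k.
    move: lx hrx hry hr; rewrite /k; move: (enum_rank x : nat) (enum_rank y : nat) => a b.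
    move=> h1 h2 h3 h4; have e1 : #|[eta V]| = #|V| by []; rewrite e1 in h2 h3; lia.
  have := H (Ordinal ly); rewrite /f /= eqxx.
  case: eqP => [/= hy|_]; first by exfalso; apply: hr.
  by rewrite (key y x (Ordinal ly)) // (negbTE nexy) /=; lra.
Qed.
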